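(* Let $R_1,\dots,R_k$ be norms on $\mathbb{R}^p$, $\theta_1^*,\dots,\theta_k^*\in\mathbb{R}^p$, and $\mathcal{C}_i=\operatorname{cone}\{\Delta: R_i(\theta_i^*+\Delta)\le R_i(\theta_i^* )\}$. Let $$\mathcal{H}=\Big\{\sum_{i=1}^k\Delta_i:\Delta_i\in\mathcal{C}_i,\ \sum_{i=1}^k\|\Delta_i\|_2=1\Big\},\qquad \mathcal{A}=\Big(\sum_{i=1}^k\mathcal{C}_i\Big)\cap S^{p-1}.$$ Suppose the structural coherence condition holds with constant $\rho>0$, i.e. $\|\sum_{i=1}^k\Delta_i\|_2\ge\rho\sum_{i=1}^k\|\Delta_i\|_2$ for all $\Delta_i\in\mathcal{C}_i$. Then for every random vector $Z\in\mathbb{R}^p$ and every $\xi>0$, $$Q_{\rho\xi}(\mathcal{H};Z)\ \ge\ Q_\xi(\mathcal{A};Z).$$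
   Context: $\operatorname{cone}(E)$ is the smallest closed cone containing $E$; $S^{p-1}$ is the Euclidean unit sphere. For a set $E\subseteq\mathbb{R}^p$ and random vector $Z$, the marginal tail function is $Q_\xi(E;Z)=\inf_{u\in E}P(|\langle Z,u\rangle|\ge\xi)$. *)

(* Defs.v *)
From HB Require Import structures.
From mathcomp Require Import all_boot all_order all_algebra.
From mathcomp Require Import all_classical all_reals all_analysis.
Set Implicit Arguments. Unset Strict Implicit. Unset Printing Implicit Defensive.
Import Order.TTheory GRing.Theory Num.Theory.
Import numFieldNormedType.Exports.
Local Open Scope classical_set_scope.
Local Open Scope ring_scope.

Section Defs.
Variables (R : realType) (p : nat).

Definition dotp (x y : 'rV[R]_p) : R := \sum_(j < p) x ord0 j * y ord0 j.
Definition norm2 (x : 'rV[R]_p) : R := Num.sqrt (dotp x x).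

Definition is_norm (N : 'rV[R]_p -> R) : Prop :=
  [/\ forall x, N x = 0 -> x = 0,
      forall (c : R) x, N (c *: x) = `|c| * N x
    & forall x y, N (x + y) <= N x + N y].

Definition is_cone (K : set 'rV[R]_p) : Prop :=
  forall x (t : R), K x -> 0 <= t -> K (t *: x).

Definition cone_hull (E : set 'rV[R]_p) : set 'rV[R]_p :=
  [set x | forall K : set 'rV[R]_p, is_cone K -> closed K -> E `<=` K -> K x].

Definition descent_cone (N : 'rV[R]_p -> R) (th : 'rV[R]_p) : set 'rV[R]_p :=
  cone_hull [set D | N (th + D) <= N th].

Definition sphere : set 'rV[R]_p := [set x | norm2 x = 1].

Definition setH (k : nat) (C : 'I_k -> set 'rV[R]_p) : set 'rV[R]_p :=
  [set x | exists D : 'I_k -> 'rV[R]_p,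
     [/\ forall i, C i (D i), \sum_(i < k) norm2 (D i) = 1 & x = \sum_(i < k) D i]].

Definition sum_sets (k : nat) (C : 'I_k -> set 'rV[R]_p) : set 'rV[R]_p :=
  [set x | exists D : 'I_k -> 'rV[R]_p, (forall i, C i (D i)) /\ x = \sum_(i < k) D i].

Definition setA (k : nat) (C : 'I_k -> set 'rV[R]_p) : set 'rV[R]_p :=
  sum_sets C `&` sphere.

Definition Qtail (d : measure_display) (T : measurableType d)
    (P : probability T R) (xi : R) (E : set 'rV[R]_p) (Z : T -> 'rV[R]_p) : \bar R :=
  ereal_inf [set P [set w | xi <= `|dotp (Z w) u|] | u in E].

End Defs.

(* Main.v *)
Require Import Defs.
From HB Require Import structures.
From mathcomp Require Import all_boot all_order all_algebra.
From mathcomp Require Import all_classical all_reals all_analysis.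
From mathcomp Require Import ring measurable_realfun.
Import Order.TTheory GRing.Theory Num.Theory.
Local Open Scope classical_set_scope.
Local Open Scope ring_scope.

Lemma cone_hull_cone (R : realType) (p : nat) (E : set 'rV[R]_p) :
  is_cone (cone_hull E).
Proof. move=> x t Hx t0 K Kc Kcl EK; apply: (Kc x t _ t0); exact: (Hx K Kc Kcl EK). Qed.

Lemma dotp_ge0 (R : realType) (p : nat) (x : 'rV[R]_p) : 0 <= dotp x x.
Proof. by apply: sumr_ge0 => j _; rewrite -expr2 sqr_ge0. Qed.

Lemma dotpZr (R : realType) (p : nat) (x y : 'rV[R]_p) (c : R) :
  dotp x (c *: y) = c * dotp x y.
Proof.
rewrite /dotp mulr_sumr; apply: eq_bigr => j _; rewrite mxE; ring.
Qed.

Lemma norm2Z (R : realType) (p : nat) (x : 'rV[R]_p) (c : R) :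
  norm2 (c *: x) = `|c| * norm2 x.
Proof.
rewrite /norm2 dotpZr /dotp.
have -> : \sum_(j < p) (c *: x) ord0 j * x ord0 j = c * dotp x x.
  rewrite /dotp mulr_sumr; apply: eq_bigr => j _; rewrite mxE; ring.
rewrite mulrA -expr2 sqrtrM ?sqr_ge0 // sqrtr_sqr //.
Qed.

Theorem lemma2 (R : realType) (p k : nat)
  (Rn : 'I_k -> 'rV[R]_p -> R) (th : 'I_k -> 'rV[R]_p) (rho : R)
  (hnorm : forall i, is_norm (Rn i))
  (hrho : 0 < rho)
  (hcoh : forall D : 'I_k -> 'rV[R]_p,
     (forall i, descent_cone (Rn i) (th i) (D i)) ->
     rho * \sum_(i < k) norm2 (D i) <= norm2 (\sum_(i < k) D i))
  (d : measure_display) (T : measurableType d) (P : probability T R)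
  (Z : T -> 'rV[R]_p)
  (hZ : forall j : 'I_p, measurable_fun setT (fun w => Z w ord0 j))
  (xi : R) (hxi : 0 < xi) :
  (Qtail P xi (setA (fun i => descent_cone (Rn i) (th i))) Z
   <= Qtail P (rho * xi) (setH (fun i => descent_cone (Rn i) (th i))) Z)%E.
Proof.
have mS : forall (v : 'rV[R]_p) (c : R), measurable [set w | c <= `|dotp (Z w) v|].
  move=> v c.
  have mf : measurable_fun setT (fun w => `|dotp (Z w) v|).
    apply: (@measurableT_comp _ _ _ _ _ _ (@Num.norm _ R)); first exact: normr_measurable.
    rewrite /dotp; apply: measurable_sum => j.
    by apply: measurable_funM => //; apply: measurable_cst.
  have := mf measurableT _ (measurable_itv `[c, +oo[).
  rewrite setTI; congr measurable; apply/seteqP; split => w /=;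
    by rewrite in_itv /= andbT.
apply: le_ereal_inf_tmp => _ [u [D [HD HS ->]] <-].
set n := norm2 (\sum_(i < k) D i).
have hn : rho <= n by have := hcoh D HD; rewrite HS mulr1.
have n0 : 0 < n by apply: lt_le_trans hn.
apply: (@le_trans _ _ (P [set w | xi <= `|dotp (Z w) (n^-1 *: \sum_(i < k) D i)|])).
  apply: ereal_inf_lbound; exists (n^-1 *: \sum_(i < k) D i) => //.
  split.
    exists (fun i => n^-1 *: D i); split; last by rewrite scaler_sumr.
    move=> i; apply: cone_hull_cone; first exact: HD.
    by rewrite invr_ge0 ltW.
  rewrite /sphere /= norm2Z -/n ger0_norm ?invr_ge0 ?ltW //.
  by rewrite mulVf // gt_eqF.
apply: le_measure; rewrite ?inE //.
move=> w /=; rewrite dotpZr normrM (@ger0_norm _ n^-1); last by rewrite invr_ge0 ltW.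
move=> h; rewrite (_ : xi = n^-1 * (n * xi)) in h; last by rewrite mulrA mulVf ?mul1r // gt_eqF.
rewrite ler_pM2l ?invr_gt0 // in h.
apply: (le_trans _ h); apply: ler_wpM2r => //; exact: ltW.
Qed.
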